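(* Let $\alpha>0$, $\epsilon\in(0,1/2)$, consider Poisson percolation on $\mathbb{Z}^2$, let $n=n(p_c+\epsilon,t)$ and let $C_1>0$ be a constant. Then, as $t\to\infty$, the probability that there exists an edge inside the square $[-C_1\log n, C_1\log n]^2$ that is closed at time $t$ tends to $0$.
   Context: Poisson percolation: each nearest-neighbour edge of $\mathbb{Z}^2$ with midpoint $x$ is assigned an independent Poisson process of rate $\|x\|^{-\alpha}$, where $\|x\|=\max\{|x_1|,|x_2|\}$; the edge becomes open at the time of its first arrival (closed before it), so at time $t$ the edge with midpoint $x$ is open with probability $1-\exp(-t\|x\|^{-\alpha})$, independently over edges. $p_c=1/2$ and $n(p,t)=c_{p,\alpha}t^{1/\alpha}$ with $c_{p,\alpha}=(-\log(1-p))^{-1/\alpha}$. *)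

(* Defs.v *)
From HB Require Import structures.
From mathcomp Require Import all_boot all_order all_algebra.
From mathcomp Require Import all_classical all_reals all_analysis.
Set Implicit Arguments. Unset Strict Implicit. Unset Printing Implicit Defensive.
Import Order.TTheory GRing.Theory Num.Theory.
Local Open Scope ring_scope.

Section Poisson.
Variable R : realType.

(* A nearest-neighbour edge of Z^2 is encoded as (a, b, d): it joins (a,b)
   to (a+1,b) if d = true (horizontal), and to (a,b+1) if d = false. *)
Definition edge := (int * int * bool)%type.

Definition edge_end1 (e : edge) : int * int := (e.1.1, e.1.2).
Definition edge_end2 (e : edge) : int * int :=
  if e.2 then (e.1.1 + 1, e.1.2) else (e.1.1, e.1.2 + 1).

Definition edge_mid (e : edge) : R * R :=
  if e.2 then ((e.1.1)%:~R + 2^-1, (e.1.2)%:~R)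
  else ((e.1.1)%:~R, (e.1.2)%:~R + 2^-1).

Definition supnorm (x : R * R) : R := Num.max `|x.1| `|x.2|.

(* probability that the edge e is open at time t in Poisson percolation
   with exponent alpha: 1 - exp(-t ||x||^(-alpha)), x the midpoint *)
Definition open_prob (alpha t : R) (e : edge) : R :=
  1 - expR (- (t * (supnorm (edge_mid e)) `^ (- alpha))).

Definition in_square (L : R) (v : int * int) : bool :=
  (`|(v.1)%:~R| <= L) && (`|(v.2)%:~R| <= L).

Definition int_range (L : R) : seq int :=
  let N := (`|Num.floor `|L| |%N + 1)%N in
  [seq (i%:Z - N%:Z) | i <- iota 0 (N + N + 1)].

Definition square_edges (L : R) : seq edge :=
  [seq e <- [seq (x.1, x.2, d) | x <- [seq (a, b) | a <- int_range L, b <- int_range L],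
                                d <- [:: true; false]]
     | in_square L (edge_end1 e) && in_square L (edge_end2 e)].

(* Product (independent) law of the open/closed states of the finitely many
   edges of a finite edge set s at time t: a configuration w assigns true
   (open) or false (closed) to each edge. *)
Definition config_weight (alpha t : R) (s : seq edge)
    (w : {ffun seq_sub s -> bool}) : R :=
  \prod_(e : seq_sub s) (if w e then open_prob alpha t (val e)
                         else 1 - open_prob alpha t (val e)).

Definition prob_some_closed (alpha t : R) (s : seq edge) : R :=
  \sum_(w : {ffun seq_sub s -> bool} | [exists e, ~~ w e]) config_weight alpha t w.

Definition p_c : R := 2^-1.
Definition n_pt (alpha p t : R) : R :=
  (- ln (1 - p)) `^ (- alpha^-1) * t `^ (alpha^-1).

End Poisson.

(* Main.v *)
Require Import Defs.
From HB Require Import structures.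
From mathcomp Require Import all_boot all_order all_algebra.
From mathcomp Require Import all_classical all_reals all_analysis.
From mathcomp Require Import ring lra zify.
Import Order.TTheory GRing.Theory Num.Theory.
Import numFieldNormedType.Exports.
Local Open Scope classical_set_scope.
Local Open Scope ring_scope.

Set Implicit Arguments. Unset Strict Implicit.
Section A.
Variable R : realType.
Lemma sum_some_false (I : finType) (p : I -> R) :
  \sum_(w : {ffun I -> bool} | [exists e, ~~ w e])
     \prod_(e : I) (if w e then p e else 1 - p e) = 1 - \prod_(e : I) p e.
Proof.
have tot : \sum_(w : {ffun I -> bool}) \prod_(e : I) (if w e then p e else 1 - p e) = 1.
  rewrite -(bigA_distr_bigA (fun e (j : bool) => if j then p e else 1 - p e)).
  rewrite big1 // => i _; rewrite big_bool /=; lra.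
rewrite (bigID [pred w : {ffun I -> bool} | [exists e, ~~ w e]]) /= in tot.
rewrite [X in _ + X](@big_pred1 _ _ _ _ [ffun=> true]) in tot; last first.
  move=> w /=; rewrite negb_exists; apply/forallP/eqP => [H|-> e]; last by rewrite ffunE.
  by apply/ffunP => e; rewrite ffunE; have := H e; rewrite negbK.
rewrite [X in _ + X](eq_bigr p) in tot; last by move=> e _; rewrite ffunE.
lra.
Qed.

Lemma one_sub_prod_le (I : finType) (p : I -> R) :
  (forall e, 0 <= p e <= 1) ->
  1 - \prod_(e : I) p e <= \sum_(e : I) (1 - p e).
Proof.
move=> hp.
suff : (0 <= \prod_(e : I) p e <= 1) /\ 1 - \prod_(e : I) p e <= \sum_(e : I) (1 - p e) by case.
apply: (big_rec2 (fun y1 y2 => (0 <= y1 <= 1) /\ 1 - y1 <= y2)).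
  by split; [rewrite ler01 lexx|rewrite subrr].
move=> i y1 y2 _ [/andP[h0 h1] h2]; have /andP[q0 q1] := hp i.
split; last by nra.
by apply/andP; split; nra.
Qed.

Lemma card_seq_sub_le (T : choiceType) (s : seq T) : (#|{: seq_sub s}| <= size s)%N.
Proof.
rewrite cardE -(size_map val); apply: uniq_leq_size.
  by rewrite (map_inj_uniq val_inj) enum_uniq.
by move=> x /mapP[y _ ->]; exact: (valP y).
Qed.
Lemma int_half (a : int) : 2^-1 <= `|(a%:~R : R) + 2^-1|.
Proof.
have [ha|ha] := lerP 0 a.
  have : (0:R) <= a%:~R by rewrite ler0z.
  move=> h; rewrite ger0_norm; lra.
have h : (a <= -1)%R by lia.
have : (a%:~R : R) <= ((-1 : int)%:~R) by rewrite ler_int.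
rewrite intrN /= => h'; rewrite ler0_norm; lra.
Qed.

Lemma half_le (a : int) (L : R) : `|(a%:~R : R)| <= L -> `|((a + 1)%:~R : R)| <= L ->
  `|(a%:~R : R) + 2^-1| <= L.
Proof.
rewrite intrD !ler_norml => /andP[h1 h2] /andP[h3 h4]; apply/andP; split; lra.
Qed.

Lemma mid_bounds (L : R) e : e \in square_edges L ->
  2^-1 <= supnorm (edge_mid R e) <= L.
Proof.
rewrite mem_filter => /andP[/andP[]] + + _.
case: e => [[a b] d]; rewrite /in_square /edge_end1 /edge_end2 /edge_mid /supnorm /=.
case: d => /= /andP[h1 h2] /andP[h3 h4]; apply/andP; split.
- by rewrite le_max int_half.
- by rewrite ge_max h2 half_le.
- by rewrite le_max int_half orbT.
- by rewrite ge_max h1 half_le.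
Qed.
Lemma size_square_edges (L : R) : 1 <= L ->
  (size (square_edges L))%:R <= 98 * L ^+ 2.
Proof.
move=> L1.
set N := (`|Num.floor `|L| |%N + 1)%N.
have hN : (N%:R : R) <= L + 2.
  rewrite /N natrD natr_absz intr_norm.
  have h1 := floor_le `|L|; have h2 := floorD1_gt `|L|.
  rewrite intrD mulr1z in h2.
  have hL : `|L| = L by rewrite ger0_norm //; lra.
  have : `|(Num.floor `|L|)%:~R : R| <= L + 1 by rewrite ler_norml; apply/andP; split; lra.
  move=> h; lra.
have hs : (size (square_edges L) <= (N + N + 1) * (N + N + 1) * 2)%N.
  rewrite /square_edges size_filter (leq_trans (count_size _ _)) //.
  by rewrite size_allpairs size_allpairs /int_range size_map size_iota.
clearbody N.
have := hs; rewrite -(ler_nat R) => /le_trans; apply.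
rewrite !natrM !natrD /=.
have h0 : (0 : R) <= N%:R by [].
nra.
Qed.

Lemma bound_t (alpha t L : R) : 0 < alpha -> 0 < t -> 1 <= L ->
  0 <= prob_some_closed alpha t (square_edges L) <=
  98 * L ^+ 2 * expR (- (t * (L `^ alpha)^-1)).
Proof.
move=> a0 t0 L1.
rewrite /prob_some_closed /config_weight sum_some_false.
set s := square_edges L.
have hp : forall e : seq_sub s, 0 <= open_prob alpha t (val e) <= 1.
  move=> e; rewrite /open_prob.
  set x := t * _.
  have hx : 0 <= x by rewrite /x; apply: mulr_ge0; [exact: ltW | exact: powR_ge0].
  have := expR_gt0 (- x).
  have : expR (- x) <= 1 by rewrite -expR0 ler_expR; lra.
  move=> h1 h2; apply/andP; split; lra.
apply/andP; split.
  by rewrite subr_ge0 prodr_ile1 // => e _; exact: hp.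
have H1 := one_sub_prod_le hp. apply: (le_trans H1).
have E : forall x : R, 1 - (1 - x) = x by move=> x; lra.
have hq : forall e : seq_sub s, 1 - open_prob alpha t (val e) <= expR (- (t * (L `^ alpha)^-1)).
  move=> e; rewrite /open_prob E ler_expR lerN2 ler_pM2l // powRN.
  have /andP[m1 m2] := mid_bounds (valP e).
  have m0 : 0 < supnorm (edge_mid R (val e)) by apply: lt_le_trans m1; rewrite invr_gt0.
  rewrite lef_pV2 ?posrE ?powR_gt0 //; last by lra.
  by apply: ge0_ler_powR => //; rewrite ?nnegrE; lra.
apply: le_trans (ler_sum _ (fun e _ => hq e)) _.
rewrite sumr_const -[X in X <= _]mulr_natr [X in X <= _]mulrC.
apply: ler_wpM2r; first exact: expR_ge0.
apply: le_trans (size_square_edges L1).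
by rewrite ler_nat card_seq_sub_le.
Qed.

Lemma expN_le (y : R) : 0 < y -> expR (- y) <= 4 * (y^-1) ^+ 2.
Proof.
move=> y0.
have h1 := expR_ge1Dx (y / 2).
have e : expR y = expR (y / 2) ^+ 2 by rewrite expr2 -expRD; congr expR; field.
have h2 : (y / 2) ^+ 2 <= expR y.
  have hy : 0 <= y / 2 by rewrite divr_ge0 // ltW.
  have hy2 : y / 2 <= expR (y / 2) by lra.
  by rewrite e !expr2; apply: ler_pM.
rewrite expRN.
have -> : 4 * (y^-1) ^+ 2 = ((y / 2) ^+ 2)^-1 by field; rewrite gt_eqF.
rewrite lef_pV2 ?posrE ?expR_gt0 // exprn_gt0 // divr_gt0 //.
Qed.

Lemma L_growth (a b t d : R) : 0 < b -> 0 < d -> 1 <= t ->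
  a + b * ln t <= (`|a| + b / d) * t `^ d.
Proof.
move=> b0 d0 t1.
have t0 : 0 < t by lra.
have x1 : 1 <= t `^ d by rewrite -(powRr0 t) ler_powR // ltW.
have hl : ln t <= t `^ d / d.
  rewrite ler_pdivlMr // mulrC -ln_powR; apply: ltW; apply: ln_sublinear.
  by rewrite powR_gt0.
have ha : a <= `|a| * t `^ d.
  apply: le_trans (ler_norm a) _; rewrite ler_peMr //.
have hb : b * ln t <= b / d * t `^ d.
  by rewrite mulrAC -mulrA ler_pM2l.
rewrite mulrDl; lra.
Qed.
End A.

Unset Implicit Arguments. Set Strict Implicit.

Theorem lemma2 (R : realType) (alpha eps C1 : R) :
  0 < alpha -> 0 < eps -> eps < 2^-1 -> 0 < C1 ->
  (prob_some_closed alpha t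
     (square_edges (C1 * ln (n_pt alpha (p_c R + eps) t))))
    @[t --> +oo] --> (0 : R).
Proof.
move=> a0 e0 e1 C0.
set A := (- ln (1 - (p_c R + eps))) `^ (- alpha^-1).
have A0 : 0 < A.
  apply: powR_gt0; rewrite oppr_gt0; apply: ln_lt0; rewrite /p_c; apply/andP; split; lra.
set a := C1 * ln A; set b := C1 / alpha.
have b0 : 0 < b by rewrite divr_gt0.
have hL : forall t, 0 < t -> C1 * ln (n_pt alpha (p_c R + eps) t) = a + b * ln t.
  move=> t t0; rewrite /n_pt -/A lnM; last 2 first.
  - by rewrite posrE.
  - by rewrite posrE powR_gt0.
  by rewrite ln_powR /a /b; ring.
set d := (2 * (1 + alpha))^-1.
have d0 : 0 < d by rewrite invr_gt0; lra.
set K := `|a| + b / d.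
have K0 : 0 <= K by rewrite addr_ge0 // divr_ge0 // ltW.
set D := 392 * (K * K `^ alpha) ^+ 2.
apply/cvgrPdist_lt => e ep.
near=> t.
have t1 : 1 < t by near: t; apply: nbhs_pinfty_gt; rewrite num_real.
have t2 : expR ((1 - a) / b) < t by near: t; apply: nbhs_pinfty_gt; rewrite num_real.
have t3 : D / e < t by near: t; apply: nbhs_pinfty_gt; rewrite num_real.
have t0 : 0 < t by lra.
rewrite hL //.
set L := a + b * ln t.
have L1 : 1 <= L.
  have : (1 - a) / b < ln t by rewrite -(expRK ((1 - a) / b)) ltr_ln ?posrE ?expR_gt0.
  rewrite ltr_pdivrMr // /L; lra.
have /andP[f0 f1] := bound_t a0 t0 L1.
rewrite sub0r normrN ger0_norm //.
apply: le_lt_trans f1 _.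
have LA0 : 0 < L `^ alpha by rewrite powR_gt0 //; lra.
have y0 : 0 < t * (L `^ alpha)^-1 by rewrite mulr_gt0 // invr_gt0.
have := expN_le y0 => hE.
have LKd : L <= K * t `^ d by apply: L_growth => //; lra.
have LKa : L `^ alpha <= K `^ alpha * t `^ (d * alpha).
  rewrite powRrM -powRM ?powR_ge0 //.
  apply: ge0_ler_powR; [exact: ltW | by rewrite nnegrE; lra | by rewrite nnegrE mulr_ge0 ?powR_ge0 | exact: LKd].
have tn0 : t != 0 by rewrite gt_eqF.
have ts : t `^ d * t `^ (d * alpha) = t `^ (2^-1).
  rewrite -powRD ?tn0 ?implybT //; congr (t `^ _); rewrite /d; field; lra.
have tt : t `^ (2^-1) * t `^ (2^-1) = t.
  rewrite -powRD ?tn0 ?implybT //.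
  have -> : (2^-1 + 2^-1 : R) = 1 by field.
  by rewrite powRr1 // ltW.
set g := L * L `^ alpha.
have g0 : 0 <= g by rewrite mulr_ge0 ?powR_ge0 //; lra.
have hg : g <= K * K `^ alpha * t `^ (2^-1).
  rewrite /g -ts.
  have : L * L `^ alpha <= (K * t `^ d) * (K `^ alpha * t `^ (d * alpha)).
    by apply: ler_pM => //; lra.
  move=> h; apply: (le_trans h); rewrite le_eqVlt; apply/orP; left; apply/eqP; ring.
have hg2 : g ^+ 2 <= (K * K `^ alpha) ^+ 2 * t.
  rewrite -tt.
  have := ler_pM g0 g0 hg hg.
  move=> h; rewrite expr2; apply: (le_trans h); rewrite le_eqVlt; apply/orP; left; apply/eqP; ring.
have E1 : 98 * L ^+ 2 * (4 * ((t * (L `^ alpha)^-1)^-1) ^+ 2) = 392 * g ^+ 2 / t ^+ 2.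
  rewrite /g; field; rewrite tn0 gt_eqF //.
apply: (le_lt_trans (ler_wpM2l _ hE)).
  by rewrite mulr_ge0 // sqr_ge0.
rewrite E1.
have : 392 * g ^+ 2 / t ^+ 2 <= D / t.
  rewrite /D ler_pdivrMr ?exprn_gt0 //.
  have -> : 392 * (K * K `^ alpha) ^+ 2 / t * t ^+ 2 = 392 * ((K * K `^ alpha) ^+ 2 * t).
    by field.
  by rewrite ler_pM2l.
move=> h; apply: (le_lt_trans h).
by rewrite ltr_pdivrMr // mulrC -ltr_pdivrMr.
Unshelve. all: end_near.
Qed.
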